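(* Let $K:X\times X\to\mathbb{C}$ be positive definite and assume that the matrix $K_F=(K(y,z))_{y,z\in F}$ is invertible for every finite $F\subset X$. Let $x\in X$. Then $\delta_x\in\mathscr{H}(K)$ if and only if $\sup\{(K_F^{-1})_{x,x}: F\subset X\text{ finite},\ x\in F\}<\infty$, and in that case $\|\delta_x\|^2_{\mathscr{H}(K)}$ equals this supremum.
   Context: $\delta_x$ is the function on $X$ equal to $1$ at $x$ and $0$ elsewhere; $\mathscr{H}(K)$ is the reproducing kernel Hilbert space of $K$ (completion of span of $K(\cdot,x)$ with $\langle K(\cdot,x),K(\cdot,y)\rangle=K(x,y)$, reproducing property $\langle K(\cdot,x),h\rangle=h(x)$). *)

(* Defs.v *)
From mathcomp Require Import all_boot all_algebra.
From mathcomp Require Import boolp reals complex.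
Set Implicit Arguments. Unset Strict Implicit. Unset Printing Implicit Defensive.
Import GRing.Theory Num.Theory.
Local Open Scope ring_scope.
Local Open Scope complex_scope.

Section RKHS.
Variables (R : realType) (X : Type).

(* A finite linear combination  h = sum_i c_i K(.,x_i),  given by the list of
   pairs (x_i, c_i). *)
Definition comb := seq (X * R[i]).

Definition ceval (K : X -> X -> R[i]) (s : comb) (y : X) : R[i] :=
  \sum_(a <- s) a.2 * K y a.1.

(* squared norm  <h,h> = sum_{i,j} conj(c_i) c_j K(x_i,x_j),
   from <K(.,x),K(.,y)> = K(x,y) (inner product antilinear in the 1st slot) *)
Definition cnorm2 (K : X -> X -> R[i]) (s : comb) : R[i] :=
  \sum_(a <- s) \sum_(b <- s) (a.2)^* * b.2 * K a.1 b.1.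

Definition csub (s t : comb) : comb := s ++ [seq (b.1, - b.2) | b <- t].

Definition posdef (K : X -> X -> R[i]) : Prop := forall s : comb, 0 <= cnorm2 K s.

(* u is a Cauchy sequence in span{K(.,x)} (for the H(K)-norm) converging
   pointwise to f; the elements of the completion H(K) are realized as such
   pointwise limits. *)
Definition approximates (K : X -> X -> R[i]) (u : nat -> comb) (f : X -> R[i]) : Prop :=
  (forall e : R[i], 0 < e -> exists N : nat, forall m n : nat,
      (N <= m)%N -> (N <= n)%N -> `|cnorm2 K (csub (u m) (u n))| < e) /\
  (forall (y : X) (e : R[i]), 0 < e -> exists N : nat, forall n : nat,
      (N <= n)%N -> `|ceval K (u n) y - f y| < e).

Definition in_RKHS (K : X -> X -> R[i]) (f : X -> R[i]) : Prop :=
  exists u, approximates K u f.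

Definition RKHS_norm2 (K : X -> X -> R[i]) (f : X -> R[i]) (r : R[i]) : Prop :=
  exists u, approximates K u f /\
    (forall e : R[i], 0 < e -> exists N : nat, forall n : nat,
        (N <= n)%N -> `|cnorm2 K (u n) - r| < e).

Definition delta (x : X) : X -> R[i] := fun y => if `[< y = x >] then 1 else 0.

(* K_F for a finite F = image of the injective f : 'I_n -> X *)
Definition KF (K : X -> X -> R[i]) (n : nat) (f : 'I_n -> X) : 'M[R[i]]_n :=
  \matrix_(i, j) K (f i) (f j).

Definition Fvals (K : X -> X -> R[i]) (x : X) (z : R[i]) : Prop :=
  exists (n : nat) (f : 'I_n -> X) (i : 'I_n),
    injective f /\ f i = x /\ z = (invmx (KF K f)) i i.

Definition is_lub (S : R[i] -> Prop) (r : R[i]) : Prop :=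
  (forall z, S z -> z <= r) /\ (forall M, (forall z, S z -> z <= M) -> r <= M).

End RKHS.

(* Main.v *)
Require Import Defs.
From mathcomp Require Import all_boot all_algebra.
From mathcomp Require Import boolp reals complex.
From mathcomp Require Import classical_sets.
From mathcomp Require Import all_order ring lra.
Import Order.TTheory GRing.Theory Num.Theory.
Local Open Scope ring_scope.
Local Open Scope complex_scope.



Section Real.
Context {R : realType}.
Implicit Types (a b e z C M rho : R).

Lemma eps_le a b : (forall e, 0 < e -> a <= b + e) -> a <= b.
Proof. by move=> H; apply/ler_addgt0Pr. Qed.

Lemma small_inv e : 0 < e -> exists N : nat, (N.+1%:R)^-1 < e.
Proof.
move=> e0; have ie0 : 0 < e^-1 by rewrite invr_gt0.
have := archi_boundP (ltW ie0); set N := Num.bound _ => HN.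
exists N; rewrite -(invrK e) ltf_pV2 ?posrE ?invr_gt0 ?ltr0Sn //.
by apply: (lt_le_trans HN); rewrite ler_nat.
Qed.

Lemma small_inv_le e : 0 < e -> exists N : nat, forall n, (N <= n)%N -> (n.+1%:R)^-1 < e.
Proof.
move=> /small_inv [N HN]; exists N => n Nn; apply: le_lt_trans HN.
by rewrite lef_pV2 ?posrE ?ltr0Sn // ler_nat.
Qed.

Lemma lim_le rho M : 0 <= M ->
  (forall e, 0 < e -> exists A, 0 <= A /\ rho <= A + e /\ A ^+ 2 <= (rho + e) * M) ->
  rho <= M.
Proof.
move=> M0 H; rewrite leNgt; apply/negP => Hlt.
have r0 : 0 < rho by apply: le_lt_trans Hlt.
have key : forall e, 0 < e -> e <= rho -> rho * (rho - M) <= e * (2 * rho + M).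
  move=> e e0 er; have [A [A0 [H1 H2]]] := H e e0.
  have h3 : 0 <= rho - e by rewrite subr_ge0.
  have h4 : rho - e <= A by rewrite lerBlDr.
  have : (rho - e) ^+ 2 <= A ^+ 2 by rewrite ler_sqr // nnegrE.
  move=> h5; have h6 := le_trans h5 H2; nra.
set e := rho * (rho - M) / (2 * (2 * rho + M)).
have D0 : 0 < 2 * (2 * rho + M) by nra.
have e0 : 0 < e by rewrite /e divr_gt0 // mulr_gt0 // subr_gt0.
have er : e <= rho.
  rewrite /e ler_pdivrMr //; nra.
have := key e e0 er.
have -> : e * (2 * rho + M) = rho * (rho - M) / 2 by rewrite /e; field; nra.
have : 0 < rho * (rho - M) by rewrite mulr_gt0 // subr_gt0.
move=> h; lra.
Qed.

End Real.

Lemma quad_lemma (R : realFieldType) (P Q n : R) :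
  0 <= P -> 0 <= Q -> 0 <= n ->
  (forall l : R, 0 <= P - 2 * l * n + l ^+ 2 * n * Q) -> n <= P * Q.
Proof.
move=> P0 Q0 n0 H.
have [Qz|Qp] := eqVneq Q 0.
  subst Q; rewrite mulr0.
  have [nz|np] := eqVneq n 0; first by rewrite nz.
  have n0' : 0 < n by rewrite lt0r np n0.
  have := H ((P + 1) / (2 * n)).
  have -> : P - 2 * ((P + 1) / (2 * n)) * n + ((P + 1) / (2 * n)) ^+ 2 * n * 0 = -1.
    by field; rewrite ?mulf_neq0 ?pnatr_eq0.
  by rewrite ler0N1.
have Q0' : 0 < Q by rewrite lt0r Qp Q0.
have := H (Q^-1).
have -> : P - 2 * Q^-1 * n + Q^-1 ^+ 2 * n * Q = (P * Q - n) / Q by field.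
by rewrite pmulr_lge0 ?invr_gt0 // subr_ge0.
Qed.

Section Cplx.
Context {R : realType}.
Implicit Types (w v : R[i]) (a e : R).
Definition nbc w : R := complex.Re w ^+ 2 + complex.Im w ^+ 2.
Definition nr w : R := Num.sqrt (nbc w).
Lemma nbc_ge0 w : 0 <= nbc w. Proof. by rewrite addr_ge0 ?sqr_ge0. Qed.
Lemma normE w : `|w| = (nr w)%:C. Proof. by rewrite normc_def. Qed.
Lemma nr_ge0 w : 0 <= nr w. Proof. exact: sqrtr_ge0. Qed.
Lemma nr_sq w : nr w ^+ 2 = nbc w. Proof. by rewrite sqr_sqrtr // nbc_ge0. Qed.
Lemma nrD w v : nr (w + v) <= nr w + nr v.
Proof. by rewrite -lecR rmorphD /= -!normE ler_normD. Qed.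
Lemma nrM w v : nr (w * v) = nr w * nr v.
Proof. by apply: complexI; rewrite rmorphM /= -!normE normrM. Qed.
Lemma nrN w : nr (- w) = nr w.
Proof. by apply: complexI; rewrite -!normE normrN. Qed.
Lemma nrB w v : nr (w - v) = nr (v - w).
Proof. by rewrite -nrN opprB. Qed.
Lemma nrC a : nr (a%:C) = `|a|.
Proof. by rewrite /nr /nbc /= expr0n /= addr0 sqrtr_sqr. Qed.
Lemma nr_conj w : nr (w^*) = nr w.
Proof. by case: w => a b; rewrite /nr /nbc /= sqrrN. Qed.
Lemma ltC w e : (`|w| < e%:C) = (nr w < e).
Proof. by rewrite normE ltcR. Qed.
Lemma posC (e' : R[i]) : 0 < e' -> e' = (complex.Re e')%:C /\ 0 < complex.Re e'.
Proof. by case: e' => a b; rewrite ltcE /= => /andP[/eqP -> ->]. Qed.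
Lemma nr_le w a : 0 <= a -> nbc w <= a ^+ 2 -> nr w <= a.
Proof. by move=> a0 h; rewrite -(ger0_norm a0) -sqrtr_sqr ler_sqrt // sqr_ge0. Qed.
Lemma nr_Im (w : R[i]) : `|complex.Im w| <= nr w.
Proof.
rewrite -sqrtr_sqr ler_sqrt ?nbc_ge0 // /nbc lerDr sqr_ge0 //.
Qed.
Lemma nr_Re (w : R[i]) : `|complex.Re w| <= nr w.
Proof.
rewrite -sqrtr_sqr ler_sqrt ?nbc_ge0 // /nbc lerDl sqr_ge0 //.
Qed.
Lemma nr_lt (w : R[i]) (a : R) : 0 <= a -> nbc w < a ^+ 2 -> nr w < a.
Proof. by move=> a0 h; rewrite -(ger0_norm a0) -sqrtr_sqr ltr_sqrt // (le_lt_trans (nbc_ge0 w) h). Qed.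
End Cplx.


Section SumLim.
Context {R : realType} {X : Type}.
Lemma nr0 : nr (0 : R[i]) = 0.
Proof. by rewrite /nr /nbc /= expr0n /= addr0 sqrtr0. Qed.

Lemma sumlim (s : seq (X * R[i])) (g : nat -> X -> R[i]) (f : X -> R[i]) :
  (forall y (e : R), 0 < e -> exists N, forall n, (N <= n)%N -> nr (g n y - f y) < e) ->
  forall e : R, 0 < e -> exists N, forall n, (N <= n)%N ->
    nr (\sum_(a <- s) a.2^* * g n a.1 - \sum_(a <- s) a.2^* * f a.1) < e.
Proof.
move=> Hg; elim: s => [|a s IH] e e0.
  by exists 0%N => n _; rewrite !big_nil subrr nr0.
have e2 : 0 < e / 2 by rewrite divr_gt0.
have [N1 HN1] := IH _ e2.
have c0 : 0 < nr a.2 + 1 by rewrite ltr_wpDl ?nr_ge0.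
have e3 : 0 < e / 2 / (nr a.2 + 1) by rewrite divr_gt0.
have [N2 HN2] := Hg a.1 _ e3.
exists (maxn N1 N2) => n; rewrite geq_max => /andP[n1 n2].
rewrite !big_cons.
have -> : a.2^* * g n a.1 + \sum_(j <- s) j.2^* * g n j.1 -
   (a.2^* * f a.1 + \sum_(j <- s) j.2^* * f j.1) =
   a.2^* * (g n a.1 - f a.1) + (\sum_(j <- s) j.2^* * g n j.1 - \sum_(j <- s) j.2^* * f j.1).
  by ring.
apply: (le_lt_trans (nrD _ _)).
have h1 := HN1 _ n1; have h2 := HN2 _ n2.
rewrite nrM nr_conj.
have h3 : nr a.2 * nr (g n a.1 - f a.1) <= e / 2.
  apply: (le_trans (y := nr a.2 * (e / 2 / (nr a.2 + 1)))).
    by apply: ler_wpM2l; rewrite ?nr_ge0 // ltW.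
  rewrite mulrA ler_pdivrMr //; have := nr_ge0 a.2; nra.
lra.
Qed.
End SumLim.

Section Alg.
Context {R : realType} {X : Type} (K : X -> X -> R[i]).

Definition Bf (s t : comb R X) : R[i] :=
  \sum_(a <- s) \sum_(b <- t) (a.2)^* * b.2 * K a.1 b.1.
Definition scl (c : R[i]) (t : comb R X) : comb R X := [seq (b.1, c * b.2) | b <- t].

Lemma cnorm2E s : cnorm2 K s = Bf s s. Proof. by []. Qed.

Lemma Bcatl s1 s2 t : Bf (s1 ++ s2) t = Bf s1 t + Bf s2 t.
Proof. by rewrite /Bf big_cat. Qed.
Lemma Bcatr s t1 t2 : Bf s (t1 ++ t2) = Bf s t1 + Bf s t2.
Proof. by rewrite /Bf -big_split /=; apply: eq_bigr => a _; rewrite big_cat. Qed.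
Lemma Bsclr c s t : Bf s (scl c t) = c * Bf s t.
Proof.
rewrite /Bf mulr_sumr; apply: eq_bigr => a _.
rewrite big_map mulr_sumr; apply: eq_bigr => b _ /=; ring.
Qed.
Lemma Bscll c s t : Bf (scl c s) t = c^* * Bf s t.
Proof.
rewrite /Bf big_map mulr_sumr; apply: eq_bigr => a _.
rewrite mulr_sumr; apply: eq_bigr => b _ /=; rewrite rmorphM /=; ring.
Qed.
Lemma csubE s t : csub s t = s ++ scl (-1) t.
Proof. by rewrite /csub /scl; congr (_ ++ _); apply: eq_map => b; rewrite mulN1r. Qed.
Lemma Bceval s t : Bf s t = \sum_(a <- s) (a.2)^* * ceval K t a.1.
Proof.
rewrite /Bf; apply: eq_bigr => a _; rewrite /ceval mulr_sumr.
by apply: eq_bigr => b _; rewrite mulrA.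
Qed.
Lemma ceval_cat s t y : ceval K (s ++ t) y = ceval K s y + ceval K t y.
Proof. by rewrite /ceval big_cat. Qed.
Lemma ceval_scl c s y : ceval K (scl c s) y = c * ceval K s y.
Proof. rewrite /ceval big_map mulr_sumr; apply: eq_bigr => b _ /=; ring. Qed.
Lemma ceval_csub s t y : ceval K (csub s t) y = ceval K s y - ceval K t y.
Proof. by rewrite csubE ceval_cat ceval_scl mulN1r. Qed.

Hypothesis pd : posdef K.

Lemma Kherm y z : K z y = (K y z)^*.
Proof.
have h1 := pd [:: (y, 1)]. have h2 := pd [:: (z, 1)].
have h3 := pd [:: (y, 1); (z, 1)]. have h4 := pd [:: (y, 1); (z, 'i)].
move: h1 h2 h3 h4; rewrite /cnorm2 !big_cons !big_nil /= !addr0.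
case: (K y y) => a1 b1; case: (K z z) => a2 b2; case: (K y z) => a3 b3;
case: (K z y) => a4 b4.
rewrite !lecE /=; simpc; rewrite /=.
move=> /andP[/eqP e1 _] /andP[/eqP e2 _] /andP[/eqP e3 _] /andP[/eqP e4 _].
congr (_ +i* _); lra.
Qed.

Lemma Bherm s t : Bf t s = (Bf s t)^*.
Proof.
rewrite /Bf rmorph_sum exchange_big /=; apply: eq_bigr => a _.
rewrite rmorph_sum; apply: eq_bigr => b _.
rewrite !rmorphM /= conjcK Kherm; ring.
Qed.

Definition q s := complex.Re (Bf s s).
Lemma QE s : Bf s s = (q s)%:C.
Proof.
have := pd s; rewrite cnorm2E /q; case: (Bf s s) => a b.
by rewrite lecE /= => /andP[/eqP -> _].
Qed.
Lemma q_ge0 s : 0 <= q s.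
Proof. by have := pd s; rewrite cnorm2E QE lecR. Qed.

Lemma CS s t : nbc (Bf s t) <= q s * q t.
Proof.
apply: quad_lemma; rewrite ?q_ge0 ?nbc_ge0 // => l.
have := pd (s ++ scl (-(l%:C * (Bf s t)^*)) t).
rewrite cnorm2E !Bcatl !Bcatr !Bsclr !Bscll (Bherm s t) !QE /nbc.
rewrite -!complexr0.
case: (Bf s t) => a b /=; simpc; rewrite /= => /andP[_ H].
by apply: (le_trans H); rewrite le_eqVlt; apply/orP; left; apply/eqP; ring.
Qed.

Lemma Bsubr s t u : Bf s (csub t u) = Bf s t - Bf s u.
Proof. by rewrite csubE Bcatr Bsclr mulN1r. Qed.
Lemma Bsubl s t u : Bf (csub t u) s = Bf t s - Bf u s.
Proof. by rewrite csubE Bcatl Bscll rmorphN1 mulN1r. Qed.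
Lemma qsub s t : (q (csub s t))%:C = Bf s s - Bf s t - Bf t s + Bf t t.
Proof. rewrite -QE Bsubl !Bsubr; ring. Qed.
Lemma qsub_sym s t : q (csub s t) = q (csub t s).
Proof. apply: complexI; rewrite !qsub; ring. Qed.
Lemma par s t : q s <= 2 * q t + 2 * q (csub s t).
Proof.
have H := q_ge0 (csub (csub s t) t).
have E : (q (csub (csub s t) t))%:C = (2 * q t + 2 * q (csub s t) - q s)%:C.
  rewrite -QE !(Bsubl, Bsubr).
  rewrite !rmorphB !rmorphD !rmorphM /= qsub -!QE rmorph_nat; ring.
move/complexI: E => E; rewrite E in H; lra.
Qed.
Lemma pt_bound d y : nbc (ceval K d y) <= q d * q [:: (y, 1)].
Proof.
have := CS [:: (y, 1)] d; rewrite mulrC; apply: le_trans.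
by rewrite Bceval big_seq1 /= rmorph1 mul1r.
Qed.
End Alg.
Lemma In_mem (T : eqType) (p : T) (s : seq T) : List.In p s -> p \in s.
Proof. by elim: s => //= a s IH [->|/IH]; rewrite inE ?eqxx // => ->; rewrite orbT. Qed.
Lemma mem_In (T : eqType) (p : T) (s : seq T) : p \in s -> List.In p s.
Proof. by elim: s => //= a s IH; rewrite inE => /orP[/eqP ->|/IH]; [left|right]. Qed.

Lemma sum_In (T : Type) (V : nmodType) (s : seq T) (F G : T -> V) :
  (forall a, List.In a s -> F a = G a) -> \sum_(a <- s) F a = \sum_(a <- s) G a.
Proof.
elim: s => [|a s IH] H; first by rewrite !big_nil.
by rewrite !big_cons H /= ?IH //; [move=> b hb; apply: H; right | left].
Qed.

Section Main.
Context {R : realType} {X : Type} (K : X -> X -> R[i]) (x : X).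
Hypothesis pd : posdef K.
Hypothesis inv : forall (n : nat) (f : 'I_n -> X), injective f -> KF K f \in unitmx.

Local Notation del := (delta R x).
Definition interp (h : comb R X) (ps : seq X) :=
  forall p, List.In p ps -> ceval K h p = del p.
Definition good h := interp h (map fst h).
Definition ok h := good h /\ Fvals K x (Bf K h h).

Lemma good_B h g : interp g (map fst h) -> Bf K h g = \sum_(a <- h) (a.2)^* * del a.1.
Proof.
move=> Hg; rewrite Bceval; apply: sum_In => a ha; rewrite Hg //.
by apply: List.in_map.
Qed.

Lemma good_BB h g : good h -> interp g (map fst h) -> Bf K h g = Bf K h h.
Proof. by move=> Hh Hg; rewrite (good_B _ _ Hg) (good_B _ _ Hh). Qed.

Lemma mono g h : good g -> interp h (map fst g) -> q K (csub h g) = q K h - q K g.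
Proof.
move=> Hg Hh; apply: complexI.
rewrite (qsub K pd) (Bherm K pd g h) (good_BB _ _ Hg Hh) !(QE K pd) conjc_real rmorphB /=; ring.
Qed.
Lemma mk n (f : 'I_n -> X) (i0 : 'I_n) : injective f -> f i0 = x ->
  exists hm, ok hm /\ Bf K hm hm = invmx (KF K f) i0 i0 /\
    (forall k, ceval K hm (f k) = del (f k)) /\
    (forall k, List.In (f k) (map fst hm)).
Proof.
move=> fi fx; set M := invmx (KF K f).
set hm := [seq (f j, M j i0) | j <- enum 'I_n].
have Hd k : del (f k) = (k == i0)%:R.
  rewrite /delta; case: eqP => [->|ne]; first by rewrite fx asboolT.
  by rewrite asboolF // => e; apply: ne; apply: fi; rewrite e fx.
have Hc k : ceval K hm (f k) = (k == i0)%:R.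
  have : (KF K f *m M) k i0 = (1%:M : 'M_n) k i0 by rewrite mulmxV // inv.
  rewrite !mxE => <-; rewrite /ceval big_map big_enum /=.
  by apply: eq_bigr => j _; rewrite mxE mulrC.
have Hin k : List.In (f k) (map fst hm).
  rewrite /hm -map_comp; apply: (List.in_map (fun j => f j)).
  by apply: mem_In; rewrite mem_enum.
have Hg : good hm.
  move=> p /List.in_map_iff [a [<- /List.in_map_iff [j [<- _]]]] /=.
  by rewrite Hc Hd.
have HB : Bf K hm hm = (M i0 i0)^*.
  rewrite Bceval big_map big_enum /= (bigD1 i0) //= Hc eqxx mulr1 big1 ?addr0 //.
  by move=> j /negbTE jn; rewrite Hc jn mulr0.
have HB' : Bf K hm hm = M i0 i0.
  by rewrite -[M i0 i0]conjcK -HB (QE K pd) conjc_real.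
exists hm; split; [split=> //|split=> //; split=> // k; by rewrite Hc Hd].
by exists n, f, i0; rewrite HB'.
Qed.
Lemma Kc (ps : seq X) : exists h, ok h /\ interp h ps /\
  (forall p, List.In p ps -> List.In p (map fst h)).
Proof.
pose ps' : seq {classic X} := @undup {classic X} ((x : {classic X}) :: (ps : seq {classic X})).
pose n := size ps'.
pose f := fun j : 'I_n => (nth x ps' j : X).
have fi : injective f.
  move=> j k E; apply/val_inj/eqP.
  rewrite -(nth_uniq (x : {classic X}) (ltn_ord j) (ltn_ord k) (undup_uniq _)); exact/eqP.
have pos p : (p : {classic X}) \in ps' -> exists k, f k = p.
  move=> hp; have hi : (index p ps' < n)%N by rewrite index_mem.
  exists (Ordinal hi).
  by rewrite /f /= (nth_index (x : {classic X}) hp).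
have [i0 fx] : exists k, f k = x by apply: pos; rewrite mem_undup mem_head.
have [hm [okh [_ [Hc Hin]]]] := mk _ _ _ fi fx.
exists hm; split=> //; split=> p hp; have [k <-] : exists k, f k = p.
- by apply: pos; rewrite mem_undup in_cons; apply/orP; right; exact: In_mem.
- exact: Hc.
- by apply: pos; rewrite mem_undup in_cons; apply/orP; right; exact: In_mem.
- exact: Hin.
Qed.

Lemma Fv_ok z : Fvals K x z -> exists h, ok h /\ Bf K h h = z.
Proof.
move=> [n [f [i [fi [fx ->]]]]].
by have [hm [okh [HB _]]] := mk _ _ _ fi fx; exists hm.
Qed.

Lemma ok_ge0 h : ok h -> 0 <= q K h.
Proof. by move=> _; apply: q_ge0. Qed.
Definition cauchy (u : nat -> comb R X) := forall e : R, 0 < e -> exists N, forall m n,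
  (N <= m)%N -> (N <= n)%N -> q K (csub (u m) (u n)) < e.
Definition ptw (u : nat -> comb R X) := forall y (e : R), 0 < e -> exists N, forall n,
  (N <= n)%N -> nr (ceval K (u n) y - del y) < e.
Definition nconv (u : nat -> comb R X) (rho : R) := forall e : R, 0 < e -> exists N, forall n,
  (N <= n)%N -> `|q K (u n) - rho| < e.

Lemma normQ d : `|cnorm2 K d| = (q K d)%:C.
Proof. by rewrite cnorm2E (QE K pd) normE nrC ger0_norm // q_ge0. Qed.

Lemma app_iff u : approximates K u del <-> cauchy u /\ ptw u.
Proof.
split.
- move=> [H1 H2]; split.
  + move=> e e0; have e0' : (0 : R[i]) < e%:C by rewrite ltcR.
    have [N HN] := H1 _ e0'.
    by exists N => m n hm hn; have := HN m n hm hn; rewrite normQ ltcR.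
  + move=> y e e0; have e0' : (0 : R[i]) < e%:C by rewrite ltcR.
    have [N HN] := H2 y _ e0'.
    by exists N => n hn; have := HN n hn; rewrite ltC.
- move=> [H1 H2]; split.
  + move=> e' /posC [-> e0]; have [N HN] := H1 _ e0.
    by exists N => m n hm hn; rewrite normQ ltcR; apply: HN.
  + move=> y e' /posC [-> e0]; have [N HN] := H2 y _ e0.
    by exists N => n hn; rewrite ltC; apply: HN.
Qed.

Lemma conv_iff u r : (forall e : R[i], 0 < e -> exists N : nat, forall n : nat,
        (N <= n)%N -> `|cnorm2 K (u n) - r| < e) <-> r = (complex.Re r)%:C /\ nconv u (complex.Re r).
Proof.
split.
- move=> H.
  have Hr : forall e : R, 0 < e -> exists n, nr ((q K (u n))%:C - r) < e.
    move=> e e0; have e0' : (0 : R[i]) < e%:C by rewrite ltcR.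
    have [N HN] := H _ e0'.
    by exists N; have := HN N (leqnn N); rewrite ltC cnorm2E (QE K pd).
  have Im0 : complex.Im r = 0.
    apply/eqP; rewrite -normr_le0; apply: eps_le => e e0; rewrite add0r.
    have [n Hn] := Hr e e0; apply: ltW; apply: le_lt_trans Hn.
    by apply: (le_trans _ (nr_Im _)); rewrite raddfB /= sub0r normrN.
  split; first by case: r Im0 {H Hr} => a b /= ->.
  move=> e e0; have e0' : (0 : R[i]) < e%:C by rewrite ltcR.
    have [N HN] := H _ e0'.
  exists N => n hn; have := HN n hn; rewrite ltC cnorm2E (QE K pd) => h.
  by apply: le_lt_trans h; apply: (le_trans _ (nr_Re _)); rewrite raddfB /=.
- move=> [-> Hc] e' /posC [-> e0]; have [N HN] := Hc _ e0.
  exists N => n hn; rewrite cnorm2E (QE K pd) -rmorphB /= normE nrC ltcR.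
  exact: HN.
Qed.

Lemma UB u C : ptw u -> (exists N, forall n, (N <= n)%N -> q K (u n) <= C) ->
  forall h, ok h -> q K h <= C.
Proof.
move=> Hp [N HN] h [gh _].
have C0 : 0 <= C by apply: le_trans (HN N (leqnn N)); apply: q_ge0.
apply: lim_le => // e e0.
have [N' HN'] := sumlim h (fun n => ceval K (u n)) del Hp _ e0.
pose n := maxn N N'.
have hn1 : (N <= n)%N by rewrite leq_maxl.
have hn2 : (N' <= n)%N by rewrite leq_maxr.
have E1 := HN' n hn2.
rewrite -Bceval -(good_B _ _ gh) -/(Bf K h h) (QE K pd) in E1.
exists (nr (Bf K h (u n))); split; first exact: nr_ge0.
split.
- have -> : q K h = nr ((q K h)%:C) by rewrite nrC ger0_norm // q_ge0.
  have -> : (q K h)%:C = Bf K h (u n) + ((q K h)%:C - Bf K h (u n)) by ring.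
  apply: (le_trans (nrD _ _)); rewrite lerD2l nrB; exact: ltW.
- rewrite nr_sq; apply: (le_trans (CS K pd _ _)).
  apply: (le_trans (y := q K h * C)); first by rewrite ler_wpM2l ?q_ge0 // HN.
  by rewrite ler_wpM2r // lerDl ltW.
Qed.
Lemma LB u rho M : cauchy u -> ptw u -> nconv u rho ->
  (forall h, ok h -> q K h <= M) -> rho <= M.
Proof.
move=> Hc Hp Hn HM.
have M0 : 0 <= M.
  have [h [okh _]] := Kc [::]; apply: le_trans (HM h okh); exact: q_ge0.
apply: lim_le => // e e0.
have e4 : 0 < e / 4 by rewrite divr_gt0.
have D0 : 0 < `|rho| + e + 1 by rewrite ltr_wpDl // addr_ge0 // ltW.
have e2 : 0 < (e / 4) ^+ 2 / (`|rho| + e + 1) by rewrite divr_gt0 // exprn_gt0.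
have [N1 HN1] := Hn _ e4.
have [N2 HN2] := Hc _ e2.
pose n := maxn N1 N2.
have hn1 : (N1 <= n)%N by rewrite leq_maxl.
have hn2 : (N2 <= n)%N by rewrite leq_maxr.
have Pn := HN1 n hn1.
have Pn1 : q K (u n) <= rho + e / 4.
  by move: Pn; rewrite ltr_norml => /andP[h1 h2]; lra.
have Pn2 : rho <= q K (u n) + e / 4.
  by move: Pn; rewrite ltr_norml => /andP[h1 h2]; lra.
have [h [[gh Fh] [Hh _]]] := Kc (map fst (u n)).
have Halpha := good_B _ _ Hh.
set alpha := \sum_(a <- u n) a.2^* * del a.1 in Halpha.
have [N3 HN3] := sumlim (u n) (fun m => ceval K (u m)) del Hp _ e4.
pose m := maxn n N3.
have hm1 : (N2 <= m)%N by rewrite (leq_trans hn2) // leq_maxl.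
have hm3 : (N3 <= m)%N by rewrite leq_maxr.
have E3 := HN3 m hm3; rewrite -Bceval in E3.
have E4 : nr (Bf K (u n) (csub (u n) (u m))) <= e / 4.
  apply: nr_le; first exact: ltW.
  apply: (le_trans (CS K pd _ _)).
  have qd := HN2 n m hn2 hm1.
  apply: (le_trans (y := (`|rho| + e + 1) * ((e / 4) ^+ 2 / (`|rho| + e + 1)))).
    apply: ler_pM; [exact: q_ge0 | exact: q_ge0 | | exact: ltW qd].
    have := ler_norm rho; lra.
  by rewrite mulrC mulfVK // gt_eqF.
exists (nr alpha); split; first exact: nr_ge0.
split.
- have Hq : q K (u n) = nr (Bf K (u n) (u n)) by rewrite (QE K pd) nrC ger0_norm // q_ge0.
  apply: (le_trans Pn2); rewrite Hq.
  have -> : Bf K (u n) (u n) = alpha + (Bf K (u n) (csub (u n) (u m)) +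
        (Bf K (u n) (u m) - alpha)) by rewrite (Bsubr K); ring.
  apply: (le_trans (lerD (nrD _ _) (lexx _))).
  apply: (le_trans (lerD (lerD (lexx _) (nrD _ _)) (lexx _))).
  rewrite -!addrA lerD2l; apply: (le_trans (lerD E4 (lerD (ltW E3) (lexx _)))).
  have : 0 < e by []. lra.
- rewrite nr_sq -Halpha; apply: (le_trans (CS K pd _ _)).
  apply: ler_pM; rewrite ?q_ge0 ?HM //.
  by have := Pn1; lra.
Qed.
Lemma Build s : (forall h, ok h -> q K h <= s) ->
  (forall e : R, 0 < e -> exists h, ok h /\ s - e < q K h) ->
  exists u, cauchy u /\ ptw u /\ nconv u s.
Proof.
move=> Hub Had.
have Had' : forall n : nat, exists h, ok h /\ s - (n.+1%:R)^-1 < q K h.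
  by move=> n; apply: Had; rewrite invr_gt0 ltr0Sn.
have [g Hg] := boolp.choice Had'.
have [kc Hkc] := boolp.choice Kc.
pose h := fix h n := match n with
  | 0 => kc (map fst (g 0))
  | n'.+1 => kc (map fst (h n') ++ map fst (g n'.+1)) end.
have okh n : ok (h n) by case: n => [|n]; apply: (Hkc _).1.
have hg n : interp (h n) (map fst (g n)).
  case: n => [|n] /=; first by case: (Hkc (map fst (g 0))) => _ [].
  case: (Hkc (map fst (h n) ++ map fst (g n.+1))) => _ [Hi _] p hp.
  by apply: Hi; apply: List.in_or_app; right.
have sub n m : (n <= m)%N -> forall p, List.In p (map fst (h n)) -> List.In p (map fst (h m)).
  elim: m => [|m IH]; first by rewrite leqn0 => /eqP ->.
  rewrite leq_eqVlt => /orP[/eqP -> //|]; rewrite ltnS => /IH {}IH p /IH hp /=.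
  case: (Hkc (map fst (h m) ++ map fst (g m.+1))) => _ [_ Hs].
  by apply: Hs; apply: List.in_or_app; left.
have ih n m : (n <= m)%N -> interp (h m) (map fst (h n)).
  case: m => [|m]; first by rewrite leqn0 => /eqP ->; case: (okh 0).
  rewrite leq_eqVlt => /orP[/eqP -> |]; first by case: (okh m.+1).
  rewrite ltnS => nm p hp /=.
  case: (Hkc (map fst (h m) ++ map fst (g m.+1))) => _ [Hi _].
  by apply: Hi; apply: List.in_or_app; left; apply: sub nm p hp.
have lo n : s - (n.+1%:R)^-1 < q K (h n).
  apply: (lt_le_trans (Hg n).2); have := mono _ _ (Hg n).1.1 (hg n).
  by move=> E; rewrite -subr_ge0 -E q_ge0.
have hi n : q K (h n) <= s by apply: Hub.
have dif n m : (n <= m)%N -> q K (csub (h m) (h n)) <= (n.+1%:R)^-1.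
  move=> nm; rewrite (mono _ _ (okh n).1 (ih _ _ nm)).
  have := lo n; have := hi m; set t := (n.+1%:R)^-1; lra.
exists h; split; [|split].
- move=> e e0; have [N HN] := small_inv_le _ e0.
  exists N => m n hm hn; case: (leqP n m) => nm.
    by apply: le_lt_trans (dif _ _ nm) (HN _ hn).
  rewrite qsub_sym //; apply: le_lt_trans (dif _ _ (ltnW nm)) (HN _ hm).
- move=> y e e0.
  set c := q K [:: (y, 1)].
  have c0 : 0 <= c by apply: q_ge0.
  have ee : 0 < e ^+ 2 / (c + 1) by rewrite divr_gt0 ?exprn_gt0 // ltr_wpDl.
  have [N HN] := small_inv_le _ ee.
  exists N => n hn.
  case: (Hkc (map fst (h n) ++ [:: y])) => [[gk _] [Hi _]].
  have ky : ceval K (kc (map fst (h n) ++ [:: y])) y = del y.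
    by apply: Hi; apply: List.in_or_app; right; left.
  have ikh : interp (kc (map fst (h n) ++ [:: y])) (map fst (h n)).
    by move=> p hp; apply: Hi; apply: List.in_or_app; left.
  have Ed := mono _ _ (okh n).1 ikh.
  have Hk : q K (kc (map fst (h n) ++ [:: y])) <= s.
    by apply: Hub; split=> //; case: (Hkc (map fst (h n) ++ [:: y])) => -[].
  apply: nr_lt; first exact: ltW.
  rewrite -ky -(ceval_csub K); apply: (le_lt_trans (pt_bound K pd _ _)).
  rewrite qsub_sym // -/c Ed.
  have l1 : q K (kc (map fst (h n) ++ [:: y])) - q K (h n) <= (n.+1%:R)^-1.
    move: Hk; have := lo n; set t := (n.+1%:R)^-1; lra.
  have l2 := HN n hn.
  apply: (le_lt_trans (y := (e ^+ 2 / (c + 1)) * c)).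
    apply: ler_wpM2r => //; apply: (le_trans l1); exact: ltW.
  rewrite mulrAC ltr_pdivrMr ?ltr_wpDl // ltr_pM2l ?exprn_gt0 //.
  by rewrite ltrDl.
- move=> e e0; have [N HN] := small_inv_le _ e0.
  exists N => n hn; rewrite ler0_norm ?subr_le0 //.
  have := lo n; have := HN n hn; set t := (n.+1%:R)^-1; lra.
Qed.
End Main.

Theorem corollary8p7 (R : realType) (X : Type) (K : X -> X -> R[i]) (x : X) :
  posdef K ->
  (forall (n : nat) (f : 'I_n -> X), injective f -> KF K f \in unitmx) ->
  (in_RKHS K (delta R x) <->
     exists M : R[i], forall z, Fvals K x z -> z <= M) /\
  (forall r : R[i], RKHS_norm2 K (delta R x) r <-> is_lub (Fvals K x) r).
Proof.
move=> pd inv.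
have FvE z : Fvals K x z -> exists h, ok K x h /\ z = (q K h)%:C.
  move=> /(Fv_ok K x pd inv) [h [okh <-]]; exists h; split => //; exact: (QE K pd).
have okFv h : ok K x h -> Fvals K x ((q K h)%:C) by case=> _; rewrite (QE K pd).
have [h0 ok0] : exists h, ok K x h by have [h [? _]] := Kc K x pd inv [::]; exists h.
have ubR M : (forall z, Fvals K x z -> z <= M) ->
    M = (complex.Re M)%:C /\ forall h, ok K x h -> q K h <= complex.Re M.
  move=> HM; have hM h : ok K x h -> (q K h)%:C <= M by move=> /okFv /HM.
  have := hM h0 ok0; case: M {HM} hM => a b hM; rewrite lecE /= => /andP[/eqP -> _].
  split=> // h okh; by have := hM h okh; rewrite lecE /= => /andP[_].
split.
- split.
  + move=> [u /(app_iff K x pd) [Hc Hp]].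
    have [N HN] := Hc 1 ltr01.
    exists ((2 * q K (u N) + 2)%:C) => z /FvE [h [okh ->]]; rewrite lecR.
    apply: (UB K x pd _ _ Hp _ _ okh); exists N => n hn.
    apply: (le_trans (par K pd (u n) (u N))).
    have := HN n N hn (leqnn N); lra.
  + move=> [M /ubR [_ Hb]].
    pose S := fun t : R => exists h, ok K x h /\ t = q K h.
    have hs : has_sup S.
      split; first by exists (q K h0), h0.
      by exists (complex.Re M) => t [h [okh ->]]; apply: Hb.
    have Had : forall e : R, 0 < e -> exists h, ok K x h /\ sup S - e < q K h.
      by move=> e e0; have [t [h [okh ->]] ht] := sup_adherent e0 hs; exists h.
    have Hub h : ok K x h -> q K h <= sup S.
      by move=> okh; apply: (sup_upper_bound hs); exists h.
    have [u [Hc [Hp _]]] := Build K x pd inv _ Hub Had.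
    by exists u; apply/(app_iff K x pd).
- move=> r; split.
  + move=> [u [/(app_iff K x pd) [Hc Hp] /(conv_iff K pd) [Er Hn]]].
    split.
    * move=> z /FvE [h [okh ->]]; rewrite Er lecR.
      apply: eps_le => e e0; apply: (UB K x pd _ _ Hp _ _ okh).
      have [N HN] := Hn e e0; exists N => n hn.
      by have := HN n hn; rewrite ltr_norml => /andP[h1 h2]; lra.
    * move=> M HM; have [EM HbM] := ubR M HM.
      rewrite Er EM lecR; exact: (LB K x pd inv _ _ _ Hc Hp Hn HbM).
  + move=> [Hub Hleast].
    have Er : r = (complex.Re r)%:C.
      have := Hub _ (okFv _ ok0); case: r {Hub Hleast} => a b.
      by rewrite lecE /= => /andP[/eqP -> _].
    set rho := complex.Re r in Er.
    have Hub' h : ok K x h -> q K h <= rho.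
      by move=> /okFv /Hub; rewrite Er lecR.
    have Had : forall e : R, 0 < e -> exists h, ok K x h /\ rho - e < q K h.
      move=> e e0; case: (pselect (exists h, ok K x h /\ rho - e < q K h)) => // nH.
      have : r <= (rho - e)%:C.
        apply: Hleast => z /FvE [h [okh ->]]; rewrite lecR leNgt; apply/negP => hl.
        by apply: nH; exists h.
      by rewrite {1}Er lecR; lra.
    have [u [Hc [Hp Hn]]] := Build K x pd inv _ Hub' Had.
    exists u; split; first by apply/(app_iff K x pd).
    by apply/(conv_iff K pd); rewrite Er /=.
Qed.
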